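(* Let $0<|b_0|<\frac{2}{3\sqrt3}$ and $p(x,\xi)=\xi_0^3-(\xi_1^2+x_1^2\xi_n^2)\xi_0-b_0x_1^3\xi_n^3$ on $T^*\mathbb{R}^{n+1}$, and let $\Sigma_3=\{x_1=\xi_0=\xi_1=0\}$ (near points with $\xi_n\neq0$). For every $z\in\Sigma_3$ with $\xi_n\ne0$, the propagation cone $C_z$ contains a nonzero vector of $T_z\Sigma_3$, and $C_z$ is not contained in $T_z\Sigma_3$. In particular, $C_z$ is not transversal to $\Sigma_3$.
   Context: For a point $z$ where $p$ vanishes to order exactly $3$, the localization $p_z(X)$ is the lowest (third) order term of the Taylor expansion of $p$ at $z$, a polynomial on $T_z(T^*\mathbb{R}^{n+1})$. Since $p$ is hyperbolic with respect to $\xi_0$, the hyperbolicity cone $\Gamma_z$ is the connected component containing $N=(0;1,0,\dots,0)$ (i.e. $\delta\xi_0=1$, all other components $0$) of $\{X\in T_z(T^*\mathbb{R}^{n+1}):p_z(X)\ne0\}$. The propagation cone is $C_z=\{X\in T_z(T^*\mathbb{R}^{n+1}):\sigma(X,Y)\le0\ \forall Y\in\Gamma_z\}$, where $\sigma$ is the canonical symplectic form on $T^*\mathbb{R}^{n+1}$. $p$ vanishes exactly to order $3$ on $\Sigma_3$ under the assumption on $b_0$. *)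

(* Defs.v *)
From mathcomp Require Import ssreflect ssrfun ssrbool eqtype ssrnat seq fintype bigop.
From Stdlib Require Import Reals.
Open Scope R_scope.

(* Coordinates (x_0..x_n ; xi_0..xi_n) of T^*R^{n+1}; also used for tangent
   vectors (dx ; dxi) of T_z(T^*R^{n+1}) ~ R^{2n+2}. *)
Definition vec (n : nat) := ('I_(n.+1) -> R).
Definition pt (n : nat) := (vec n * vec n)%type.

Definition vadd {n} (X Y : pt n) : pt n :=
  (fun i => fst X i + fst Y i, fun i => snd X i + snd Y i).
Definition vscale {n} (t : R) (X : pt n) : pt n :=
  (fun i => t * fst X i, fun i => t * snd X i).

Definition rsum {n} (f : 'I_(n.+1) -> R) : R := \big[Rplus/0]_(i < n.+1) f i.

Definition sympl {n} (X Y : pt n) : R :=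
  rsum (fun j => snd X j * fst Y j - fst X j * snd Y j).

Definition dist2 {n} (X Y : pt n) : R :=
  rsum (fun j => (fst X j - fst Y j) ^ 2 + (snd X j - snd Y j) ^ 2).
Definition is_open {n} (U : pt n -> Prop) : Prop :=
  forall X, U X -> exists r, 0 < r /\ forall Y, dist2 X Y < r * r -> U Y.
Definition connected_set {n} (S : pt n -> Prop) : Prop :=
  forall U V : pt n -> Prop, is_open U -> is_open V ->
    (forall X, S X -> U X \/ V X) ->
    (forall X, S X -> U X -> V X -> False) ->
    (exists X, S X /\ U X) -> (exists X, S X /\ V X) -> False.
Definition conn_component {n} (A : pt n -> Prop) (N : pt n) (X : pt n) : Prop :=
  exists S, connected_set S /\ (forall Y, S Y -> A Y) /\ S N /\ S X.

Definition i0 {n} : 'I_(n.+1) := ord0.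
Definition i1 {n} : 'I_(n.+1) := inord 1.
Definition iN {n} : 'I_(n.+1) := ord_max.

Definition ppoly {n} (b0 : R) (z : pt n) : R :=
  let x := fst z in let xi := snd z in
  xi i0 ^ 3 - (xi i1 ^ 2 + x i1 ^ 2 * xi iN ^ 2) * xi i0
  - b0 * x i1 ^ 3 * xi iN ^ 3.

(* q is the localization of order m of p at z: the lowest-order (m-th) term of
   the Taylor expansion, i.e. t^{-m} p(z + tX) -> q(X) as t -> 0. *)
Definition is_localization {n} (p : pt n -> R) (m : nat) (z : pt n)
  (q : pt n -> R) : Prop :=
  forall X : pt n,
    limit1_in (fun t => p (vadd z (vscale t X)) / t ^ m) (fun t => t <> 0) (q X) 0.

Definition Nvec {n} : pt n := (fun _ => 0, fun i => if i == ord0 then 1 else 0).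

Definition hyp_cone {n} (q : pt n -> R) : pt n -> Prop :=
  conn_component (fun X => q X <> 0) Nvec.

Definition prop_cone {n} (q : pt n -> R) (X : pt n) : Prop :=
  forall Y, hyp_cone q Y -> sympl X Y <= 0.

Definition in_Sigma3 {n} (z : pt n) : Prop :=
  fst z i1 = 0 /\ snd z i0 = 0 /\ snd z i1 = 0.
(* T_z Sigma_3 = {dx_1 = dxi_0 = dxi_1 = 0} (Sigma_3 is a linear subspace) *)
Definition in_TSigma3 {n} (z : pt n) (X : pt n) : Prop :=
  fst X i1 = 0 /\ snd X i0 = 0 /\ snd X i1 = 0.

Definition nonzero_vec {n} (X : pt n) : Prop := exists i, fst X i <> 0 \/ snd X i <> 0.

(* Main.v *)
Require Import Defs.
From HB Require Import structures.
From mathcomp Require Import ssreflect ssrfun ssrbool eqtype ssrnat seq fintype bigop.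
From Stdlib Require Import Reals Lra Psatz Classical.
Open Scope R_scope.

HB.instance Definition _ := Monoid.isComLaw.Build R 0 Rplus (fun x y z => esym (Rplus_assoc x y z)) Rplus_comm Rplus_0_l.

Lemma rsum_ge {n} (f : 'I_(n.+1) -> R) j : (forall i, 0 <= f i) -> f j <= rsum f.
Proof.
move=> H; rewrite /rsum (bigD1 j) //.
rewrite -{1}(Rplus_0_r (f j)); apply Rplus_le_compat_l.
apply: (@big_ind R (fun x => 0 <= x) 0 Rplus); [lra | intros; lra | intros; apply H].
Qed.

Definition cont {n} (f : pt n -> R) := forall X eps, 0 < eps ->
  exists r, 0 < r /\ forall Y, dist2 X Y < r*r -> Rabs (f Y - f X) < eps.

Lemma abs_of_sq x e : 0 < e -> x^2 < e*e -> Rabs x < e.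
Proof. move=> He H; unfold Rabs; destruct (Rcase_abs x); nra. Qed.

Lemma cont_fst {n} (j : 'I_(n.+1)) : cont (fun Y : pt n => fst Y j).
Proof.
move=> X e He; exists e; split => // Y HY.
apply: abs_of_sq => //.
have := @rsum_ge n (fun j => (fst X j - fst Y j) ^ 2 + (snd X j - snd Y j) ^ 2) j.
rewrite -/(dist2 X Y) => H.
have Hn : forall i, 0 <= (fst X i - fst Y i) ^ 2 + (snd X i - snd Y i) ^ 2 by move=> i; apply Rplus_le_le_0_compat; apply pow2_ge_0.
have := H Hn. have := pow2_ge_0 (X.2 j - Y.2 j). move=> h1 h2; nra.
Qed.

Lemma cont_snd {n} (j : 'I_(n.+1)) : cont (fun Y : pt n => snd Y j).
Proof.
move=> X e He; exists e; split => // Y HY.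
apply: abs_of_sq => //.
have := @rsum_ge n (fun j => (fst X j - fst Y j) ^ 2 + (snd X j - snd Y j) ^ 2) j.
rewrite -/(dist2 X Y) => H.
have Hn : forall i, 0 <= (fst X i - fst Y i) ^ 2 + (snd X i - snd Y i) ^ 2 by move=> i; apply Rplus_le_le_0_compat; apply pow2_ge_0.
have := H Hn. have := pow2_ge_0 (X.1 j - Y.1 j). move=> h1 h2; nra.
Qed.

Lemma cont_const {n} c : cont (fun _ : pt n => c).
Proof. move=> X e He; exists 1; split; [lra|] => Y _. rewrite Rminus_diag Rabs_R0 //. Qed.

Lemma min_sq r1 r2 d : 0 < r1 -> 0 < r2 -> d < Rmin r1 r2 * Rmin r1 r2 -> d < r1 * r1 /\ d < r2 * r2.
Proof.
move=> h1 h2 H.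
have m1 := Rmin_l r1 r2; have m2 := Rmin_r r1 r2.
have m0 : 0 < Rmin r1 r2 by apply Rmin_glb_lt.
split; nra.
Qed.
Arguments min_sq {r1 r2 d}.

Lemma cont_add {n} (f g : pt n -> R) : cont f -> cont g -> cont (fun Y => f Y + g Y).
Proof.
move=> Hf Hg X e He.
have [r1 [h1 H1]] := Hf X (e/2) ltac:(lra).
have [r2 [h2 H2]] := Hg X (e/2) ltac:(lra).
exists (Rmin r1 r2); split; first by apply Rmin_glb_lt.
move=> Y HY; have [d1 d2] := min_sq h1 h2 HY.
have a1 := H1 Y d1; have a2 := H2 Y d2.
have := Rabs_triang (f Y - f X) (g Y - g X).
replace (f Y - f X + (g Y - g X)) with (f Y + g Y - (f X + g X)) by ring. lra.
Qed.

Lemma cont_ext {n} (f g : pt n -> R) : (forall Y, f Y = g Y) -> cont f -> cont g.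
Proof. move=> E H X e He; have [r [h1 h2]] := H X e He; exists r; split => // Y HY.
rewrite -!E; auto. Qed.

Lemma cont_mul {n} (f g : pt n -> R) : cont f -> cont g -> cont (fun Y => f Y * g Y).
Proof.
move=> Hf Hg X e He.
set M := Rabs (f X) + Rabs (g X) + 1.
have HM : 0 < M by have := Rabs_pos (f X); have := Rabs_pos (g X); rewrite /M; lra.
set e1 := Rmin 1 (e / (2 * M)).
have he1 : 0 < e1 by apply Rmin_glb_lt; [lra | apply Rdiv_lt_0_compat; lra].
have e11 : e1 <= 1 := Rmin_l _ _.
have e12 : e1 <= e / (2*M) := Rmin_r _ _.
have e13 : M * e1 <= e / 2.
  have : M * (e / (2*M)) = e/2 by field; lra.
  nra.
have [r1 [h1 H1]] := Hf X e1 he1.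
have [r2 [h2 H2]] := Hg X e1 he1.
exists (Rmin r1 r2); split; first by apply Rmin_glb_lt.
move=> Y HY; have [d1 d2] := min_sq h1 h2 HY.
have a1 := H1 Y d1; have a2 := H2 Y d2.
replace (f Y * g Y - f X * g X) with (f X * (g Y - g X) + g X * (f Y - f X) + (f Y - f X) * (g Y - g X)) by ring.
have t1 := Rabs_triang (f X * (g Y - g X) + g X * (f Y - f X)) ((f Y - f X) * (g Y - g X)).
have t2 := Rabs_triang (f X * (g Y - g X)) (g X * (f Y - f X)).
rewrite !Rabs_mult in t1 t2.
have p1 := Rabs_pos (f X); have p2 := Rabs_pos (g X).
have p3 := Rabs_pos (f Y - f X); have p4 := Rabs_pos (g Y - g X).
have : Rabs (f X) * Rabs (g Y - g X) + Rabs (g X) * Rabs (f Y - f X) + Rabs (f Y - f X) * Rabs (g Y - g X) <= M * e1.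
  rewrite /M. nra.
lra.
Qed.

Lemma cont_pow {n} (f : pt n -> R) k : cont f -> cont (fun Y => f Y ^ k).
Proof.
move=> Hf; elim: k => [|k IH] /=; first exact: cont_const.
exact: cont_mul.
Qed.

Lemma cont_opp {n} (f : pt n -> R) : cont f -> cont (fun Y => - f Y).
Proof. move=> H; apply: (@cont_ext n (fun Y => (-1) * f Y)); first by move=> Y; ring.
apply: cont_mul => //; exact: cont_const. Qed.

Lemma cont_sub {n} (f g : pt n -> R) : cont f -> cont g -> cont (fun Y => f Y - g Y).
Proof. move=> H1 H2; apply: cont_add => //; exact: cont_opp. Qed.

Lemma open_pos {n} (f : pt n -> R) : cont f -> is_open (fun Y => 0 < f Y).
Proof.
move=> H X HX; have [r [h1 h2]] := H X (f X) HX; exists r; split => // Y HY.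
have := Rabs_def2 _ _ (h2 Y HY); lra.
Qed.

Lemma open_and {n} (U V : pt n -> Prop) : is_open U -> is_open V -> is_open (fun Y => U Y /\ V Y).
Proof.
move=> HU HV X [ux vx].
have [r1 [h1 H1]] := HU X ux; have [r2 [h2 H2]] := HV X vx.
exists (Rmin r1 r2); split; first by apply Rmin_glb_lt.
move=> Y HY; have [d1 d2] := min_sq h1 h2 HY; auto.
Qed.

Lemma open_or {n} (U V : pt n -> Prop) : is_open U -> is_open V -> is_open (fun Y => U Y \/ V Y).
Proof.
move=> HU HV X [ux|vx].
- have [r [h H]] := HU X ux; exists r; split => // Y HY; left; auto.
- have [r [h H]] := HV X vx; exists r; split => // Y HY; right; auto.
Qed.
Definition qf {n} (b0 c : R) (Y : pt n) : R :=
  snd Y i0 ^ 3 - (snd Y i1 ^ 2 + fst Y i1 ^ 2 * c ^ 2) * snd Y i0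
  - b0 * fst Y i1 ^ 3 * c ^ 3.

Lemma loc_exists {n} (b0 : R) (z : pt n) : in_Sigma3 z ->
  is_localization (ppoly b0) 3 z (qf b0 (snd z iN)).
Proof.
move=> [h1 [h2 h3]] X.
set c := snd z iN.
set g := fun t => snd X i0 ^ 3 - (snd X i1 ^ 2 + fst X i1 ^ 2 * (c + t * snd X iN) ^ 2) * snd X i0
  - b0 * fst X i1 ^ 3 * (c + t * snd X iN) ^ 3.
have E : forall t, t <> 0 -> ppoly b0 (vadd z (vscale t X)) / t ^ 3 = g t.
  move=> t ht; rewrite /ppoly /vadd /vscale /g /= h1 h2 h3 -/c. field; auto.
have Hc : continuity_pt g 0 by rewrite /g; reg.
have g0 : g 0 = qf b0 c X by rewrite /g /qf; ring.
move: Hc; rewrite /continuity_pt /continue_in /limit1_in /limit_in => Hc eps heps.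
have [al [hal Hal]] := Hc eps heps.
exists al; split => // t [ht hd].
rewrite E // -g0; apply: Hal; split => //; split => //; auto.
Qed.

Lemma loc_unique {n} (p : pt n -> R) z q q' : is_localization p 3 z q ->
  is_localization p 3 z q' -> forall X, q X = q' X.
Proof.
move=> H H' X; apply: (single_limit _ _ _ _ _ _ (H X) (H' X)).
move=> alp ha; exists (alp / 2); split; first lra.
rewrite /R_dist Rminus_0_r Rabs_pos_eq; lra.
Qed.

Lemma qf_nonpos (b0 c a b u : R) : Rabs b0 < 2 / (3 * sqrt 3) -> 0 <= a ->
  3 * a ^ 2 = b ^ 2 + u ^ 2 * c ^ 2 ->
  a ^ 3 - (b ^ 2 + u ^ 2 * c ^ 2) * a - b0 * u ^ 3 * c ^ 3 <= 0.
Proof.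
move=> hb ha E.
set s := sqrt 3.
have hs : 0 < s by apply sqrt_lt_R0; lra.
have hs2 : s * s = 3 by apply sqrt_sqrt; lra.
set v := Rabs (u * c).
have hv : 0 <= v by apply Rabs_pos.
have hv2 : v * v = (u*c)^2 by rewrite /v -Rabs_mult Rabs_pos_eq; [ring | nra].
have hsa : v <= s * a.
  have : v * v <= (s * a) * (s * a).
    replace ((s*a)*(s*a)) with ((s*s)*(a*a)) by ring; rewrite hs2 hv2; nra.
  have : 0 <= s * a by nra.
  nra.
have hv3 : v ^ 3 <= 3 * s * a ^ 3.
  have : v^3 <= (s*a)^3 by apply pow_incr; lra.
  have : (s*a)^3 = 3 * s * a^3 by rewrite -hs2; ring.
  lra.
have hb' : Rabs b0 * (3 * s) < 2.
  have e2 : 2 / (3 * s) * (3 * s) = 2 by field; apply Rgt_not_eq; lra.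
  change (sqrt 3) with s in hb. rewrite -e2; apply Rmult_lt_compat_r; lra.
have hb0 : - b0 * (u*c)^3 <= Rabs b0 * v ^ 3.
  have : Rabs (- b0 * (u*c)^3) = Rabs b0 * v^3 by rewrite Rabs_mult Rabs_Ropp RPow_abs.
  have := Rle_abs (- b0 * (u*c)^3). lra.
have : Rabs b0 * v ^ 3 <= 2 * a^3.
  have := Rabs_pos b0. have : 0 <= a^3 by apply pow_le.
  nra.
have : a ^ 3 - (b ^ 2 + u ^ 2 * c ^ 2) * a - b0 * u ^ 3 * c ^ 3 = -2 * a^3 + (- b0 * (u*c)^3) by rewrite -E; ring.
lra.
Qed.
Lemma i01 {n} : (1 <= n)%nat -> (@i1 n) != i0.
Proof.
move=> hn; apply/eqP => /(congr1 val) /=; rewrite inordK //.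
Qed.

Definition Xk {n} (k : R) : pt n :=
  (fun i => if i == i0 then 1 else if i == i1 then k else 0, fun _ => 0).

Lemma sympl_Xk {n} k (Y : pt n) : (1 <= n)%nat -> sympl (Xk k) Y = - snd Y i0 - k * snd Y i1.
Proof.
move=> hn; have h := i01 hn.
rewrite /sympl /rsum (bigD1 i0) // (bigD1 i1) //=.
rewrite big1 /=.
  rewrite (negbTE h) eqxx; ring.
move=> i /andP [h1 h2]; rewrite (negbTE h1) (negbTE h2); ring.
Qed.
Ltac cont_tac := repeat first [ apply: cont_sub | apply: cont_add | apply: cont_mul
  | apply: cont_pow | apply: cont_opp | apply: cont_fst | apply: cont_snd | apply: cont_const ].

Lemma cont_qf {n} b0 c : cont (@qf n b0 c).
Proof. rewrite /qf; cont_tac. Qed.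

Lemma cone_pos {n} b0 c (q : pt n -> R) Y : (1 <= n)%nat -> Rabs b0 < 2 / (3 * sqrt 3) ->
  (forall X, q X = qf b0 c X) -> hyp_cone q Y ->
  0 < snd Y i0 /\ 0 < 3 * snd Y i0 ^ 2 - (snd Y i1 ^ 2 + fst Y i1 ^ 2 * c ^ 2).
Proof.
move=> hn hb Eq [S [HS [HSq [SN SY]]]].
pose U := fun X : pt n => 0 < qf b0 c X /\ (0 < snd X i0 /\
   0 < 3 * snd X i0 ^ 2 - (snd X i1 ^ 2 + fst X i1 ^ 2 * c ^ 2)).
pose V := fun X : pt n => 0 < - qf b0 c X \/ (0 < qf b0 c X /\ (0 < - snd X i0 \/
   0 < (snd X i1 ^ 2 + fst X i1 ^ 2 * c ^ 2) - 3 * snd X i0 ^ 2)).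
have cq := @cont_qf n b0 c.
have oU : is_open U.
  apply: open_and; first exact: open_pos.
  apply: open_and; apply: open_pos; cont_tac.
have oV : is_open V.
  apply: open_or; first by apply: open_pos; exact: cont_opp.
  apply: open_and; first exact: open_pos.
  apply: open_or; apply: open_pos; cont_tac.
have cover : forall X, S X -> U X \/ V X.
  move=> X SX; have := HSq X SX; rewrite Eq => hq.
  case: (Rlt_or_le (qf b0 c X) 0) => h; first by right; left; lra.
  case: (Rle_lt_or_eq_dec _ _ h) => h'; last by case: hq.
  case: (Rlt_or_le (snd X i0) 0) => ha; first by right; right; split => //; left; lra.
  case: (Rtotal_order (3 * snd X i0 ^ 2 - (snd X i1 ^ 2 + fst X i1 ^ 2 * c ^ 2)) 0) => [hd|[hd|hd]].
  - right; right; split => //; right; lra.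
  - have := qf_nonpos b0 c (snd X i0) (snd X i1) (fst X i1) hb ha ltac:(lra).
    rewrite /qf in h'; lra.
  - left; split => //; split => //.
    case: (Rle_lt_or_eq_dec _ _ ha) => // e; rewrite -e in hd.
    have := pow2_ge_0 (snd X i1); have := pow2_ge_0 (fst X i1); have := pow2_ge_0 c.
    move=> *; nra.
have disj : forall X, S X -> U X -> V X -> False.
  move=> X _; rewrite /U /V; lra.
case: (classic (U Y)) => [[_ hy] //| nU].
have VY : V Y by case: (cover Y SY).
exfalso; apply: (HS U V oU oV cover disj); last by exists Y.
exists Nvec; split => //.
have h := i01 hn.
rewrite /U /qf /Nvec /= (negbTE h).
split; [nra | split; nra].
Qed.

Theorem mainTheorem9 (n : nat) (b0 : R) (z : pt n) :
  (2 <= n)%nat ->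
  0 < Rabs b0 < 2 / (3 * sqrt 3) ->
  in_Sigma3 z -> snd z iN <> 0 ->
  (exists q, is_localization (ppoly b0) 3 z q) /\
  (forall q, is_localization (ppoly b0) 3 z q ->
     (exists X, nonzero_vec X /\ in_TSigma3 z X /\ prop_cone q X) /\
     (exists X, prop_cone q X /\ ~ in_TSigma3 z X)).
Proof.
move=> hn [_ hb] hz hc.
have hn1 : (1 <= n)%nat := leq_trans (isT : (1 <= 2)%nat) hn.
have h := i01 hn1.
split; first by exists (qf b0 (snd z iN)); apply: loc_exists.
move=> q Hq.
have Eq : forall X, q X = qf b0 (snd z iN) X := loc_unique _ _ _ _ Hq (loc_exists b0 z hz).
split.
- exists (Xk 0); split; [|split].
  + exists i0; left; rewrite /Xk /= ?eqxx; lra.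
  + rewrite /in_TSigma3 /Xk /= (negbTE h) ?eqxx; auto.
  + move=> Y HY; rewrite sympl_Xk //.
    have [ha _] := cone_pos _ _ _ _ hn1 hb Eq HY; lra.
- exists (Xk (1/2)); split.
  + move=> Y HY; rewrite sympl_Xk //.
    have [ha hd] := cone_pos _ _ _ _ hn1 hb Eq HY.
    have := pow2_ge_0 (fst Y i1 * snd z iN).
    move=> hp; nra.
  + rewrite /in_TSigma3 /Xk /= (negbTE h) ?eqxx => [[e _]]; lra.
Qed.
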